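(* Let $2\leq s<t$ and let $(a_1,\dots,a_t,n_1,\dots,n_s)$ be integers with $a_1\geq\cdots\geq a_t\geq 2$, $n_1\geq\cdots\geq n_s\geq 2$, $a_l\neq n_j$ for all $l,j$, and $\prod_{l=1}^t a_l!=\prod_{j=1}^s n_j!$. Let $i_2,\dots,i_s$ be distinct elements of $\{2,\dots,t\}$ with $n_1>a_1$ and $n_j>a_{i_j}$ for $j=2,\dots,s$. Put $m_1=a_1+1$, $k_1=n_1-a_1$, $m_j=a_{i_j}+1$, $k_j=n_j-a_{i_j}$ ($j=2,\dots,s$), and $\Delta(m,k)=m(m+1)\cdots(m+k-1)$, so that $\prod_{l\notin\{1,i_2,\dots,i_s\}}a_l!=\prod_{j=1}^s\Delta(m_j,k_j)$. Then: (i) none of the integers $m_1,m_1+1,\dots,m_1+k_1-1$ is a prime; (ii) with $a=\max_{l\notin\{1,i_2,\dots,i_s\}}a_l$, one has $$a\log(a)-a\leq\log(a!)\leq (k_1+\cdots+k_s)\log(2m_1).$$ *)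

(* Defs.v *)
From Stdlib Require Import Reals Arith ZArith Znumtheory Lia.
Open Scope nat_scope.

Fixpoint prod_upto (n : nat) (f : nat -> nat) : nat :=
  match n with
  | O => 1
  | S p => prod_upto p f * f (S p)
  end.

Fixpoint sum_upto (n : nat) (f : nat -> nat) : nat :=
  match n with
  | O => 0
  | S p => sum_upto p f + f (S p)
  end.

Definition Delta (m k : nat) : nat := prod_upto k (fun r => m + r - 1)%nat.

Definition mseq (a i : nat -> nat) (j : nat) : nat :=
  if Nat.eqb j 1 then a 1 + 1 else a (i j) + 1.

Definition kseq (a n i : nat -> nat) (j : nat) : nat :=
  if Nat.eqb j 1 then n 1 - a 1 else n j - a (i j).

Open Scope nat_scope.
Definition in_rest (t s : nat) (i : nat -> nat) (l : nat) : Prop :=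
  1 <= l <= t /\ l <> 1 /\ (forall j, 2 <= j <= s -> l <> i j).

(* Main.v *)
Require Import Defs.
From Stdlib Require Import Reals Arith ZArith Znumtheory.
From Stdlib Require Import Lra Lia.
Open Scope nat_scope.

Module MCB.
From mathcomp Require Import all_boot zify.

Lemma prime_dvd_fact p n : prime p -> p %| n`! -> p <= n.
Proof.
move=> pp; rewrite fact_prod Euclid_dvd_prod //.
elim: n => [|n IH]; first by rewrite big_geq.
rewrite big_nat_recr //= => /orP [/IH H|H]; first by lia.
have := dvdn_leq (ltn0Sn n) H; lia.
Qed.

Lemma bin_odd_le m : 'C(m.*2.+1, m) <= 4 ^ m.
Proof.
elim: m => [|m IH]; first by [].
have e1 := mul_bin_diag (m.*2.+3) m.
have e2 := mul_bin_diag (m.*2.+2) m.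
have e3 := mul_bin_left (m.*2.+2) m.
rewrite /= in e1 e2.
have -> : (m.+1).*2.+1 = m.*2.+3 by lia.
rewrite expnS.
have : (m.+1) * (m.+2) * 'C(m.*2.+3, m.+1) <= (m.+1) * (m.+2) * (4 * 'C(m.*2.+1, m)).
  have E : (m.+1) * (m.+2) * 'C(m.*2.+3, m.+1) = (m.*2.+3) * (m.*2.+2) * 'C(m.*2.+1, m).
    have h3 : m.*2.+2 - m = m.+2 by lia.
    rewrite h3 in e3.
    rewrite -e2 in e3 * ; nia.
  rewrite E; nia.
rewrite -!mulnA leq_pmul2l // leq_pmul2l // => H.
apply: (leq_trans H); rewrite leq_mul2l; lia.
Qed.

Definition pf (p : nat) := if prime p then p else 1.

Lemma pf_gt0 p : 0 < pf p.
Proof. rewrite /pf; case: ifP => // /prime_gt0 //. Qed.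

Lemma prodpf_dvd_lt q lo hi : prime q -> q %| \prod_(lo <= p < hi) pf p -> q < hi.
Proof.
move=> qp; elim: hi => [|hi IH]; first by rewrite big_geq // dvdn1 => /eqP E; rewrite E in qp.
case: (leqP lo hi) => Hl; last by rewrite big_geq // dvdn1 => /eqP E; rewrite E in qp.
rewrite big_nat_recr //= Euclid_dvdM // => /orP [/IH|]; first lia.
rewrite /pf; case: ifP => [hp|_]; last by rewrite dvdn1 => /eqP E; rewrite E in qp.
rewrite dvdn_prime2 // => /eqP ->; lia.
Qed.

Lemma prodpf_dvd N lo hi : (forall p, prime p -> lo <= p < hi -> p %| N) ->
  \prod_(lo <= p < hi) pf p %| N.
Proof.
elim: hi => [|hi IH] H; first by rewrite big_geq.
case: (leqP lo hi) => Hl; last by rewrite big_geq.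
rewrite big_nat_recr //=.
have IH' : \prod_(lo <= p < hi) pf p %| N by apply: IH => p pp Hp; apply: H => //; lia.
rewrite /pf; case: ifP => hp; last by rewrite muln1.
rewrite Gauss_dvd; first by rewrite IH' H //; lia.
rewrite coprime_sym prime_coprime //; apply/negP => /(prodpf_dvd_lt hi lo hi hp); lia.
Qed.

Definition prim M := \prod_(0 <= p < M.+1) pf p.

Lemma prim_split a b : a <= b -> prim b = prim a * \prod_(a.+1 <= p < b.+1) pf p.
Proof. move=> h; rewrite /prim (big_cat_nat (n := a.+1)) //. Qed.

Lemma prime_dvd_binodd m p : prime p -> m.+2 <= p < m.*2.+2 -> p %| 'C(m.*2.+1, m).
Proof.
move=> pp Hp.
have Hm : m <= m.*2.+1 by lia.
have E := bin_fact Hm.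
rewrite (_ : m.*2.+1 - m = m.+1) in E; last lia.
rewrite -(@Gauss_dvdl p _ (m`! * m.+1`!)).
  rewrite E dvdn_fact //; lia.
rewrite prime_coprime // Euclid_dvdM //; apply/negP => /orP [] /(prime_dvd_fact _ _ pp); lia.
Qed.

Lemma prim_le M : prim M <= 4 ^ M.
Proof.
elim/ltn_ind: M => M IH.
case: (leqP M 2) => HM.
  case: M HM IH => [|[|[|]]] // _ _; rewrite /prim ?big_nat_recr //= big_geq //.
case: M HM IH => [|M'] // HM IH.
case Eo: (odd M'.+1).
  have [m Em] : exists m, M' = m.*2 by exists (M'./2); move: Eo; rewrite /= => Eo; rewrite -[M' in LHS]odd_double_half; move: Eo; case: (odd M') => //.
  subst M'.
  rewrite (@prim_split m.+1); last lia.
  have h1 : prim m.+1 <= 4 ^ m.+1 by apply: IH; lia.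
  have h2 : \prod_(m.+2 <= p < m.*2.+2) pf p <= 4 ^ m.
    apply: leq_trans (bin_odd_le m).
    apply: dvdn_leq; first by rewrite bin_gt0; lia.
    by apply: prodpf_dvd => p pp Hp; apply: prime_dvd_binodd.
  apply: (leq_trans (leq_mul h1 h2)); rewrite -expnD leq_exp2l //; lia.
rewrite /prim big_nat_recr //= -/(prim M').
have -> : pf M'.+1 = 1.
  rewrite /pf; case: ifP => // pp; case: (even_prime pp) => h; [lia | by rewrite h in Eo].
rewrite muln1 (leq_trans (IH M' (leqnn _))) // leq_exp2l //.
Qed.

Lemma central_bin_ge n : 4 ^ n <= n.*2.+1 * 'C(n.*2, n).
Proof.
elim: n => [|n IH]; first by [].
have e1 := mul_bin_diag (n.*2.+2) n.
have e2 := mul_bin_diag (n.*2.+1) n.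
have e3 := mul_bin_left (n.*2.+1) n.
rewrite /= in e1 e2.
have h3 : n.*2.+1 - n = n.+1 by lia.
rewrite h3 in e3.
have A : 'C(n.*2.+2, n.+1) = 2 * 'C(n.*2.+1, n).
  apply/eqP; rewrite -(eqn_pmul2l (ltn0Sn n)); apply/eqP; nia.
have B : n.+1 * 'C(n.*2.+1, n) = n.*2.+1 * 'C(n.*2, n) by nia.
have -> : (n.+1).*2 = n.*2.+2 by lia.
rewrite A expnS.
rewrite -(leq_pmul2l (ltn0Sn n)).
have -> : n.+1 * (n.*2.+3 * (2 * 'C(n.*2.+1, n))) = n.*2.+3 * 2 * (n.*2.+1 * 'C(n.*2, n)) by nia.
have -> : n.+1 * (4 * 4 ^ n) = 4 * n.+1 * 4 ^ n by nia.
apply: (leq_trans (n := 4 * n.+1 * (n.*2.+1 * 'C(n.*2, n)))).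
  by rewrite leq_mul2l IH orbT.
rewrite leq_mul2r; apply/orP; right; lia.
Qed.

Definition tt_ (p n k : nat) := (2 * n) %/ p ^ k - 2 * (n %/ p ^ k).

Lemma sum_trunc lo a b F : lo <= a <= b -> (forall k, a <= k < b -> F k = 0) ->
  \sum_(lo <= k < b) F k = \sum_(lo <= k < a) F k.
Proof.
move=> /andP [h1 h2] H; rewrite (big_cat_nat h1 h2) /=.
suff -> : \sum_(a <= k < b) F k = 0 by rewrite addn0.
rewrite big_nat_cond big1 //.
by move=> k /andP [/andP [hk1 hk2] _]; apply: H; rewrite hk1 hk2.
Qed.

Lemma div2_le n d : 0 < d -> 2 * (n %/ d) <= (2 * n) %/ d.
Proof. move=> hd; rewrite leq_divRL //; have := leq_trunc_div n d; lia. Qed.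

Lemma tt_le1 n d : 0 < d -> (2 * n) %/ d - 2 * (n %/ d) <= 1.
Proof.
move=> hd.
have E : 2 * n = (2 * (n %/ d)) * d + 2 * (n %% d) by rewrite {1}(divn_eq n d); lia.
rewrite E divnMDl //.
have : 2 * (n %% d) %/ d < 2 by rewrite ltn_divLR // ; have := ltn_pmod n hd; lia.
lia.
Qed.

Lemma logn_C p n : prime p -> 0 < n ->
  logn p 'C(2 * n, n) = \sum_(1 <= k < (trunc_log p (2 * n)).+1) tt_ p n k.
Proof.
move=> pp hn.
have p1 := prime_gt1 pp.
have Hn : n <= 2 * n by lia.
have E := bin_fact Hn.
rewrite (_ : 2 * n - n = n) in E; last lia.
have L : logn p (2 * n)`! = logn p 'C(2 * n, n) + (logn p n`! + logn p n`!).
  by rewrite -E lognM ?bin_gt0 ?muln_gt0 ?fact_gt0 // lognM ?fact_gt0.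
rewrite !logn_fact // in L.
have S : \sum_(1 <= k < (2 * n).+1) (2 * n) %/ p ^ k =
   \sum_(1 <= k < (2 * n).+1) tt_ p n k + 2 * \sum_(1 <= k < (2 * n).+1) (n %/ p ^ k).
  rewrite big_distrr -big_split /=; apply: eq_bigr => k _.
  rewrite /tt_ subnK // div2_le // expn_gt0; lia.
have e0 : 0 < 2 * n by lia.
have He := trunc_logP p1 e0.
have He2 := ltn_expl (trunc_log p (2 * n)) p1.
have -> : logn p 'C(2 * n, n) = \sum_(1 <= k < (2 * n).+1) tt_ p n k.
  rewrite (_ : \sum_(1 <= k < n.+1) _ = \sum_(1 <= k < (2 * n).+1) (n %/ p ^ k)) in L.
    lia.
  symmetry; apply: sum_trunc; first lia.
  move=> k /andP [hk _]; apply: divn_small; apply: (leq_trans hk).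
  apply: ltnW; apply: (leq_trans (ltn_expl k p1)); by [].
apply: sum_trunc; first lia.
move=> k /andP [hk _].
have hk' : 2 * n < p ^ k.
  apply: (leq_trans (trunc_log_ltn _ p1)); rewrite leq_exp2l //.
rewrite /tt_ !divn_small //; lia.
Qed.

Lemma logn_C_le p n : prime p -> 0 < n -> logn p 'C(2 * n, n) <= trunc_log p (2 * n).
Proof.
move=> pp hn; rewrite logn_C //.
apply: (@leq_trans (\sum_(1 <= k < (trunc_log p (2 * n)).+1) 1)).
  apply: leq_sum => k _; apply: tt_le1; rewrite expn_gt0 prime_gt0 //.
rewrite sum_nat_const_nat; lia.
Qed.

Lemma logn_C_pow p n : prime p -> 0 < n -> p ^ logn p 'C(2 * n, n) <= 2 * n.
Proof.
move=> pp hn; have e0 : 0 < 2 * n by lia.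
apply: (leq_trans _ (trunc_logP (prime_gt1 pp) e0)).
rewrite leq_exp2l; [exact: logn_C_le | exact: prime_gt1].
Qed.

Lemma logn_C_big p n : prime p -> 0 < n -> 2 * n < p * p -> logn p 'C(2 * n, n) <= 1.
Proof.
move=> pp hn hp; apply: (leq_trans (logn_C_le p n pp hn)).
rewrite leqNgt; apply/negP => h.
have e0 : 0 < 2 * n by lia.
have : p ^ 2 <= 2 * n.
  apply: (leq_trans _ (trunc_logP (prime_gt1 pp) e0)).
  by rewrite leq_exp2l; [exact: h | exact: prime_gt1].
move=> h2; have : p * p <= 2 * n by rewrite mulnn.
lia.
Qed.

Lemma logn_C_mid p n : prime p -> 0 < n -> 2 * n < p * p -> p <= n -> 2 * n < 3 * p ->
  logn p 'C(2 * n, n) = 0.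
Proof.
move=> pp hn hp h1 h2; rewrite logn_C //.
have p1 := prime_gt1 pp.
have -> : trunc_log p (2 * n) = 1.
  apply: trunc_log_eq => //; rewrite expn1 expnS expn1; lia.
rewrite big_nat1 /tt_ expn1.
have -> : 2 * n = 2 * p + (2 * n - 2 * p) by lia.
rewrite divnMDl ?prime_gt0 // (divn_small (m := 2 * n - 2 * p)); last lia.
have -> : n = 1 * p + (n - p) by lia.
rewrite divnMDl ?prime_gt0 // (divn_small (m := n - p)); last lia.
lia.
Qed.

Lemma logn_C_large p n : prime p -> 0 < n -> 2 * n < p -> logn p 'C(2 * n, n) = 0.
Proof.
move=> pp hn hp; have := logn_C_le p n pp hn.
have -> : trunc_log p (2 * n) = 0.
  apply/eqP; rewrite trunc_log_eq0; apply/orP; right; lia.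
lia.
Qed.

Lemma decomp N : 0 < N -> N = \prod_(0 <= p < N.+1) p ^ logn p N.
Proof. move=> h; rewrite -{1}(partnT h) /partn; apply: eq_bigl => p //. Qed.

Lemma prod_lt_eq X B c : \prod_(0 <= p < X) (if p < B then c else 1) = c ^ minn X B.
Proof.
elim: X => [|X IH]; first by rewrite big_geq // min0n.
rewrite big_nat_recr //= IH.
case: (ltnP X B) => h.
  rewrite (_ : minn X.+1 B = X.+1); last lia.
  by rewrite expnS mulnC.
rewrite muln1 (_ : minn X.+1 B = B) //; lia.
Qed.

Lemma prod_lt_bound X B c : 0 < c -> \prod_(0 <= p < X) (if p < B then c else 1) <= c ^ B.
Proof. move=> hc; rewrite prod_lt_eq leq_pexp2l //; lia. Qed.

Lemma prod_prim_eq X M :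
  \prod_(0 <= p < X) (if prime p && (p <= M) then p else 1) = \prod_(0 <= p < minn X M.+1) pf p.
Proof.
elim: X => [|X IH]; first by rewrite big_geq // min0n big_geq.
rewrite big_nat_recr //= IH.
case: (leqP X M) => h.
  rewrite (_ : minn X.+1 M.+1 = (minn X M.+1).+1); last lia.
  rewrite [in RHS]big_nat_recr //= (_ : minn X M.+1 = X); last lia.
  by rewrite andbT.
rewrite andbF muln1 (_ : minn X.+1 M.+1 = minn X M.+1) //; lia.
Qed.

Lemma prod_prim_bound X M :
  \prod_(0 <= p < X) (if prime p && (p <= M) then p else 1) <= 4 ^ M.
Proof.
rewrite prod_prim_eq.
case E: (minn X M.+1) => [|Y]; first by rewrite big_geq // expn_gt0.
apply: leq_trans (prim_le Y) _; rewrite leq_exp2l //; lia.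
Qed.

Lemma growth k : 7 <= k -> 3 * (2 * k + 2) * (2 * 2 ^ k + 1) < 2 ^ k * 2 ^ k.
Proof.
elim: k => [|k IH] // hk.
case: (leqP 7 k) => h.
  have := IH h; rewrite expnS; nia.
have -> : k = 6 by lia.
by [].
Qed.

Lemma bertrand_large n : 4096 * 2 <= n -> exists p, prime p && (n < p <= 2 * n).
Proof.
move=> hn.
case: (boolP (has (fun p => prime p && (n < p)) (iota 0 (2 * n).+1))) => [/hasP [p hp hpr]| /hasPn H].
  exists p; rewrite mem_iota in hp; move/andP: hpr => [-> ->] /=. move/andP: hp => [_ h]. rewrite add0n ltnS in h. exact h.
have H' : forall p, prime p -> n < p -> 2 * n < p.
  move=> p pp hp; rewrite ltnNge; apply/negP => hp2.
  have := H p; rewrite mem_iota pp hp add0n ltnS hp2 /=; by move=> /(_ isT).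
exfalso.
have hn0 : 0 < n by lia.
set C := 'C(2 * n, n).
have C0 : 0 < C by rewrite bin_gt0; lia.
set k := trunc_log 4 (2 * n).
set u := 2 ^ k.
have e0 : 0 < 2 * n by lia.
have Hk1 : 4 ^ k <= 2 * n := trunc_logP (isT : 1 < 4) e0.
have Hk2 : 2 * n < 4 ^ k.+1 := trunc_log_ltn _ (isT : 1 < 4).
have Hk7 : 7 <= k.
  apply: trunc_log_max => //; rewrite (_ : 4 ^ 7 = 4096 * 4) //; lia.
have E4 : forall j, 4 ^ j = 2 ^ j * 2 ^ j by move=> j; rewrite -expnMn.
set M := (2 * n) %/ 3.
have HC : C <= \prod_(0 <= p < C.+1) ((if p < 2 ^ k.+1 then 2 * n else 1) *
                                   (if prime p && (p <= M) then p else 1)).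
  rewrite {1}(decomp C C0); apply: leq_prod => p _.
  have f1 : 0 < (if p < 2 ^ k.+1 then 2 * n else 1) by case: ifP.
  have f2 : 0 < (if prime p && (p <= M) then p else 1).
    case: ifP => // /andP [pp _]; exact: prime_gt0.
  case pp: (prime p); last first.
    by rewrite lognE pp /= expn0 muln_gt0 f1.
  case: (leqP (p * p) (2 * n)) => hpp.
    have hpu : p < 2 ^ k.+1.
      rewrite ltnNge; apply/negP => hu.
      have := leq_mul hu hu; rewrite -E4; lia.
    rewrite hpu; apply: (leq_trans (logn_C_pow p n pp hn0)).
    apply: leq_pmulr; move: f2; by rewrite pp.
  have L1 := logn_C_big p n pp hn0 hpp.
  case: (leqP p M) => hpM.
    apply: (leq_trans (n := p ^ 1)).
      by rewrite leq_pexp2l ?prime_gt0.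
    by rewrite expn1 leq_pmull.
  have h3 : 2 * n < 3 * p.
    move: hpM; rewrite /M ltn_divLR //; lia.
  have -> : logn p C = 0.
    case: (leqP p n) => hpn; first exact: logn_C_mid.
    apply: logn_C_large => //; exact: H'.
  by rewrite expn0 muln_gt0 f1.
rewrite big_split /= in HC.
have B1 := prod_lt_bound C.+1 (2 ^ k.+1) (2 * n) e0.
have B2 := prod_prim_bound C.+1 M.
have B3 := central_bin_ge n.
rewrite -mul2n -/C in B3.
have S1 : (2 * n).+1 <= 4 ^ k.+1 by [].
have S2 : (2 * n) ^ (2 ^ k.+1) <= 4 ^ (k.+1 * (2 * u)).
  rewrite expnM expnS -/u leq_exp2r; first lia.
  rewrite muln_gt0 expn_gt0 //.
have T : 4 ^ n <= 4 ^ (k.+1 + (k.+1 * (2 * u) + M)).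
  apply: (leq_trans B3); rewrite (expnD 4 k.+1) (expnD 4 (k.+1 * (2 * u))); apply: leq_mul S1 _.
  apply: (leq_trans HC); apply: leq_mul; [exact: (leq_trans B1 S2) | exact B2].
rewrite leq_exp2l // in T.
have M3 : 3 * M <= 2 * n by have := leq_trunc_div (2 * n) 3; rewrite -/M; lia.
have U : u * u <= 2 * n by rewrite /u -E4.
have G := growth k Hk7; rewrite -/u in G.
nia.
Qed.

Lemma bertrand n : 0 < n -> exists p, prime p && (n < p <= 2 * n).
Proof.
move=> hn.
case: (leqP (4096 * 2) n) => h; first exact: bertrand_large.
have P : forall q, prime q -> n < q <= 2 * n -> exists p, prime p && (n < p <= 2 * n).
  by move=> q qp hq; exists q; rewrite qp hq.
case: (ltnP n 2) => h1; first by apply: (P 2) => //; lia.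
case: (ltnP n 3) => h2; first by apply: (P 3) => //; lia.
case: (ltnP n 5) => h3; first by apply: (P 5) => //; lia.
case: (ltnP n 7) => h4; first by apply: (P 7) => //; lia.
case: (ltnP n 13) => h5; first by apply: (P 13) => //; lia.
case: (ltnP n 23) => h6; first by apply: (P 23) => //; lia.
case: (ltnP n 43) => h7; first by apply: (P 43) => //; lia.
case: (ltnP n 83) => h8; first by apply: (P 83) => //; lia.
case: (ltnP n 163) => h9; first by apply: (P 163) => //; lia.
case: (ltnP n 317) => h10; first by apply: (P 317) => //; lia.
case: (ltnP n 631) => h11; first by apply: (P 631) => //; lia.
case: (ltnP n 1259) => h12; first by apply: (P 1259) => //; lia.
case: (ltnP n 2503) => h13; first by apply: (P 2503) => //; lia.
case: (ltnP n (2503 * 2 - 3)) => h14; first by apply: (P (2503 * 2 - 3)) => //; lia.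
by apply: (P (4986 * 2 + 1)) => //; lia.
Qed.


Lemma prod_sub_dvd (F : nat -> nat) (L S : seq nat) : uniq L -> uniq S -> {subset L <= S} ->
  \prod_(l <- L) F l %| \prod_(l <- S) F l.
Proof.
elim: L S => [|x L IH] S uL uS sub; first by rewrite big_nil dvd1n.
have xS : x \in S by apply: sub; rewrite inE eqxx.
rewrite big_cons (big_rem x xS) /=; apply: dvdn_mul => //.
move: uL => /= /andP [xL uL].
apply: IH => //; first exact: rem_uniq.
move=> y yL; rewrite mem_rem_uniq // inE; apply/andP; split.
  by apply/negP => /eqP E; rewrite -E yL in xL.
by apply: sub; rewrite inE yL orbT.
Qed.

Lemma mono_le (a : nat -> nat) t : (forall l, 1 <= l < t -> a l.+1 <= a l) ->
  forall l, 1 <= l <= t -> a l <= a 1.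
Proof.
move=> H; elim => [|l IH] // hl.
case: l IH hl => [|l] IH hl //.
apply: leq_trans (H l.+1 _) (IH _); lia.
Qed.

Lemma mono_ge (a : nat -> nat) t : (forall l, 1 <= l < t -> a l.+1 <= a l) ->
  forall l, 1 <= l <= t -> a t <= a l.
Proof.
move=> H; suff K : forall d, d < t -> a t <= a (t - d).
  move=> l hl; have := K (t - l); rewrite (_ : t - (t - l) = l); last lia.
  apply; lia.
elim => [|d IH] hd; first by rewrite subn0.
apply: leq_trans (IH _) _; first lia.
rewrite (_ : t - d = (t - d.+1).+1); last lia.
apply: H; lia.
Qed.

Lemma prod_bound lo hi B : hi <= B.+1 -> \prod_(lo <= r < hi) r <= B ^ (hi - lo).
Proof.
move=> h; rewrite -prod_nat_const_nat big_nat [X in _ <= X]big_nat; apply: leq_prod => r /= /andP [_ hr]; lia.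
Qed.

Lemma main_nat (s t : nat) (a n i : nat -> nat)
  (Hs : 2 <= s) (Hst : s < t)
  (Ha_mono : forall l, 1 <= l < t -> a l.+1 <= a l)
  (Ha2 : 2 <= a t)
  (Hn_mono : forall j, 1 <= j < s -> n j.+1 <= n j)
  (Hprod : \prod_(1 <= l < t.+1) (a l)`! = \prod_(1 <= j < s.+1) (n j)`!)
  (Hi_range : forall j, 2 <= j <= s -> 2 <= i j <= t)
  (Hi_inj : forall j j', 2 <= j <= s -> 2 <= j' <= s -> i j = i j' -> j = j')
  (Hn1 : a 1 < n 1)
  (Hnj : forall j, 2 <= j <= s -> a (i j) < n j) :
  (forall x, prime x -> a 1 + 1 <= x <= n 1 -> False) /\
  (forall l0, 2 <= l0 <= t -> (forall j, 2 <= j <= s -> l0 <> i j) ->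
     (a l0)`! <= (2 * (a 1 + 1)) ^ (\sum_(1 <= j < s.+1) (n j - a (if j == 1 then 1 else i j)))).
Proof.
have part1 : forall x, prime x -> a 1 + 1 <= x <= n 1 -> False.
  move=> x xp hx.
  have h1 : x %| \prod_(1 <= j < s.+1) (n j)`!.
    rewrite (@big_cat_nat _ _ _ 2) //=; last lia.
    rewrite big_nat1; apply: dvdn_mulr; apply: dvdn_fact; lia.
  rewrite -Hprod Euclid_dvd_prod // big_has in h1.
  move/hasP: h1 => [l hl hd].
  rewrite mem_index_iota in hl.
  have := prime_dvd_fact _ _ xp hd.
  have := mono_le a t Ha_mono l; lia.
split => //.
move=> l0 hl0 hl0i.
set g := fun j => if j == 1 then 1 else i j.
have hg : forall j, 1 <= j <= s -> 1 <= g j <= t /\ a (g j) < n j.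
  move=> j hj; rewrite /g; case: eqP => [->|hj1]; first by split => //; lia.
  have := Hi_range j; have := Hnj j; lia.
have Hn2 : n 1 <= 2 * (a 1 + 1).
  rewrite leqNgt; apply/negP => hc.
  have h0 : 0 < a 1 + 1 by lia.
  have [p /andP [pp hp]] := bertrand (a 1 + 1) h0.
  apply: (part1 p pp); lia.
set D := fun j => \prod_((a (g j)).+1 <= r < (n j).+1) r.
have HF : forall j, 1 <= j <= s -> (n j)`! = (a (g j))`! * D j.
  move=> j hj; rewrite /D; apply: fact_split; have := hg j hj; lia.
have HR : \prod_(1 <= j < s.+1) (n j)`! =
          \prod_(1 <= j < s.+1) (a (g j))`! * \prod_(1 <= j < s.+1) D j.
  rewrite -big_split /=; apply: eq_big_nat => j hj; apply: HF; lia.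
set L := l0 :: [seq g j | j <- index_iota 1 s.+1].
have uL : uniq L.
  rewrite /L /= map_inj_in_uniq ?iota_uniq ?andbT.
    apply/mapP => [[j hj E]]; rewrite mem_index_iota in hj.
    move: E; rewrite /g; case: eqP => [_|hj1] E; first lia.
    apply: (hl0i j) => //; lia.
  move=> j j' hj hj'; rewrite !mem_index_iota in hj hj'.
  rewrite /g; case: eqP => [->|h1]; case: eqP => [->|h2] //.
  - have := Hi_range j'; lia.
  - have := Hi_range j; lia.
  - apply: Hi_inj; lia.
have sL : {subset L <= index_iota 1 t.+1}.
  move=> x; rewrite /L inE => /orP [/eqP ->|/mapP [j hj ->]]; rewrite mem_index_iota; first lia.
  rewrite mem_index_iota in hj; have := hg j; lia.
have Hd := prod_sub_dvd (fun l => (a l)`!) L (index_iota 1 t.+1) uL (iota_uniq _ _) sL.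
rewrite -/(index_iota 1 t.+1) Hprod HR /L big_cons big_map in Hd.
rewrite (mulnC (a l0)`!) dvdn_pmul2l in Hd; last by apply: prodn_gt0 => j; exact: fact_gt0.
apply: leq_trans (dvdn_leq _ Hd) _.
  by apply: prodn_gt0 => j; rewrite /D big_nat; apply: prodn_cond_gt0 => r /andP [h _]; lia.
set B := 2 * (a 1 + 1).
rewrite (big_morph (fun x => B ^ x) (expnD B) (expn0 B)).
rewrite big_nat [X in _ <= X]big_nat; apply: leq_prod => j /andP [hj1 hj2].
rewrite /D; apply: (leq_trans (prod_bound _ _ B _)).
  have := mono_le n s Hn_mono j; lia.
rewrite subSS /g; by [].
Qed.


Lemma prod_upto_big n f : prod_upto n f = \prod_(1 <= i < n.+1) f i.
Proof.
elim: n => [|n IH] /=; first by rewrite big_geq.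
by rewrite IH [in RHS]big_nat_recr.
Qed.

Lemma sum_upto_big n f : sum_upto n f = \sum_(1 <= i < n.+1) f i.
Proof.
elim: n => [|n IH] /=; first by rewrite big_geq.
by rewrite IH [in RHS]big_nat_recr.
Qed.

Lemma fact_eq n : fact n = n`!.
Proof. elim: n => [|n IH] //=; rewrite factS -IH; by []. Qed.

Lemma pow_eq m k : Nat.pow m k = m ^ k.
Proof. elim: k => [|k IH] //=; rewrite expnS IH; by []. Qed.

Lemma Zprime_mc x : Znumtheory.prime (Z.of_nat x) -> prime x.
Proof.
move=> hp.
have h1 : (1 < Z.of_nat x)%Z by case: hp.
apply/primeP; split; first lia.
move=> d /dvdnP [q hq].
have hd : (Z.of_nat d | Z.of_nat x)%Z.
  by exists (Z.of_nat q); rewrite hq Nat2Z.inj_mul.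
case: (prime_divisors _ hp _ hd) => [h|[h|[h|h]]]; lia.
Qed.

Lemma main_std (s t : nat) (a n i : nat -> nat)
  (Hs : le 2 s) (Hst : lt s t)
  (Ha_mono : forall l, le 1 l /\ lt l t -> le (a (S l)) (a l))
  (Ha2 : le 2 (a t))
  (Hn_mono : forall j, le 1 j /\ lt j s -> le (n (S j)) (n j))
  (Hprod : prod_upto t (fun l => fact (a l)) = prod_upto s (fun j => fact (n j)))
  (Hi_range : forall j, le 2 j /\ le j s -> le 2 (i j) /\ le (i j) t)
  (Hi_inj : forall j j', le 2 j /\ le j s -> le 2 j' /\ le j' s -> i j = i j' -> j = j')
  (Hn1 : lt (a 1) (n 1))
  (Hnj : forall j, le 2 j /\ le j s -> lt (a (i j)) (n j)) :
  (forall x, le (mseq a i 1) x /\ lt x (mseq a i 1 + kseq a n i 1) -> ~ Znumtheory.prime (Z.of_nat x)) /\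
  (forall l, in_rest t s i l -> le 2 (a l)) /\
  (forall l, in_rest t s i l -> le (fact (a l)) (Nat.pow (2 * mseq a i 1) (sum_upto s (kseq a n i)))).
Proof.
have Ha_mono' : forall l, 1 <= l < t -> a l.+1 <= a l.
  by move=> l hl; apply/leP; apply: Ha_mono; lia.
have Hn_mono' : forall j, 1 <= j < s -> n j.+1 <= n j.
  by move=> j hj; apply/leP; apply: Hn_mono; lia.
have Hprod' : \prod_(1 <= l < t.+1) (a l)`! = \prod_(1 <= j < s.+1) (n j)`!.
  have E1 : prod_upto t (fun l => fact (a l)) = \prod_(1 <= l < t.+1) (a l)`!.
    by rewrite prod_upto_big; apply: eq_bigr => l _; rewrite fact_eq.
  have E2 : prod_upto s (fun l => fact (n l)) = \prod_(1 <= l < s.+1) (n l)`!.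
    by rewrite prod_upto_big; apply: eq_bigr => l _; rewrite fact_eq.
  by rewrite -E1 -E2.
have Hi_range' : forall j, 2 <= j <= s -> 2 <= i j <= t.
  move=> j hj; have := Hi_range j; lia.
have Hi_inj' : forall j j', 2 <= j <= s -> 2 <= j' <= s -> i j = i j' -> j = j'.
  move=> j j' hj hj'; apply: Hi_inj; lia.
have Hnj' : forall j, 2 <= j <= s -> a (i j) < n j.
  move=> j hj; have := Hnj j; lia.
have [P1 P2] := main_nat s t a n i
   ltac:(lia) ltac:(lia) Ha_mono' ltac:(lia) Hn_mono' Hprod' Hi_range' Hi_inj' ltac:(lia) Hnj'.
split.
  move=> x hx /Zprime_mc xp; apply: (P1 x xp).
  move: hx; rewrite /mseq /kseq /=; lia.
split.
  move=> l [hl [hl1 hl2]].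
  have := mono_ge a t Ha_mono' l; lia.
move=> l [hl [hl1 hl2]].
apply/leP; rewrite fact_eq pow_eq.
have -> : sum_upto s (kseq a n i) = \sum_(1 <= j < s.+1) (n j - a (if j == 1 then 1 else i j)).
  rewrite sum_upto_big; apply: eq_bigr => j _; rewrite /kseq.
  by case: (Nat.eqb_spec j 1) => [->|h] //; case: eqP.
have -> : 2 * mseq a i 1 = 2 * (a 1 + 1) by [].
apply: P2; first lia.
move=> j hj E; apply: (hl2 j); [lia | exact E].
Qed.

End MCB.

Section RealPart.
Local Open Scope R_scope.

Lemma ln_step (x : R) : 1 <= x -> x * ln (x + 1) - x * ln x <= 1.
Proof.
intros hx.
assert (hx0 : 0 < x) by lra.
assert (E : x + 1 = x * (1 + / x)) by (field; lra).
assert (hy : 0 < 1 + / x) by (assert (0 < / x) by (apply Rinv_0_lt_compat; lra); lra).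
rewrite E, ln_mult by lra.
assert (H : ln (1 + / x) <= / x).
{ apply Rle_trans with (ln (exp (/ x))); [|rewrite ln_exp; lra].
  destruct (Rle_lt_or_eq_dec _ _ (exp_ineq1_le (/ x))) as [h|h].
  - left; apply ln_increasing; lra.
  - rewrite h; lra. }
assert (x * ln (1 + / x) <= x * / x) by (apply Rmult_le_compat_l; lra).
rewrite Rinv_r in H0 by lra. lra.
Qed.

Lemma ln_fact_lower (n : nat) : (1 <= n)%nat -> INR n * ln (INR n) - INR n <= ln (INR (fact n)).
Proof.
induction n as [|n IH]; intros hn; [lia|].
destruct (Nat.eq_dec n 0) as [->|hn0].
- simpl. rewrite ln_1. lra.
- assert (IH' := IH ltac:(lia)).
  assert (h1 : 1 <= INR n) by (apply (le_INR 1); lia).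
  rewrite S_INR.
  replace (fact (S n)) with (S n * fact n)%nat by reflexivity.
  rewrite mult_INR, S_INR, ln_mult.
  + assert (hs := ln_step (INR n) h1). lra.
  + lra.
  + apply lt_0_INR. apply lt_O_fact.
Qed.

End RealPart.

Open Scope nat_scope.

Theorem lemma2p3 (s t : nat) (a n i : nat -> nat)
  (Hs : 2 <= s) (Hst : s < t)
  (Ha_mono : forall l, 1 <= l < t -> a (S l) <= a l)
  (Ha2 : 2 <= a t)
  (Hn_mono : forall j, 1 <= j < s -> n (S j) <= n j)
  (Hn2 : 2 <= n s)
  (Hneq : forall l j, 1 <= l <= t -> 1 <= j <= s -> a l <> n j)
  (Hprod : prod_upto t (fun l => fact (a l)) = prod_upto s (fun j => fact (n j)))
  (Hi_range : forall j, 2 <= j <= s -> 2 <= i j <= t)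
  (Hi_inj : forall j j', 2 <= j <= s -> 2 <= j' <= s -> i j = i j' -> j = j')
  (Hn1 : a 1 < n 1)
  (Hnj : forall j, 2 <= j <= s -> a (i j) < n j) :
  (forall x, mseq a i 1 <= x < mseq a i 1 + kseq a n i 1 ->
     ~ prime (Z.of_nat x)) /\
  (forall amax : nat,
     (exists l, in_rest t s i l /\ a l = amax) ->
     (forall l, in_rest t s i l -> a l <= amax) ->
     (INR amax * ln (INR amax) - INR amax <= ln (INR (fact amax)) <=
      INR (sum_upto s (kseq a n i)) * ln (2 * INR (mseq a i 1)))%R).
Proof.
destruct (MCB.main_std s t a n i Hs Hst Ha_mono Ha2 Hn_mono Hprod Hi_range Hi_inj Hn1 Hnj)
  as [P1 [P2 P3]].
split; [exact P1|].
intros amax [l [Hl Heq]] _. subst amax.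
assert (h2 := P2 l Hl). assert (h3 := P3 l Hl).
split.
- apply ln_fact_lower; lia.
- apply le_INR in h3. rewrite pow_INR, mult_INR in h3.
  replace (INR 2) with 2%R in h3 by (simpl; lra).
  assert (hm : (0 < INR (mseq a i 1))%R) by (apply lt_0_INR; unfold mseq; simpl; lia).
  rewrite <- ln_pow by lra.
  assert (hf : (0 < INR (fact (a l)))%R) by (apply lt_0_INR, lt_O_fact).
  destruct (Rle_lt_or_eq_dec _ _ h3) as [h|h].
  + left; apply ln_increasing; assumption.
  + rewrite h; right; reflexivity.
Qed.
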